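(* If $(A,S)$ is an arbitrary QP and $(C,T)$ is a trivial QP (on the same vertex set), then the canonical embedding $R\langle\langle A\rangle\rangle\to R\langle\langle A\oplus C\rangle\rangle$ induces an isomorphism of Jacobian algebras $\mathcal P(A,S)\to\mathcal P(A\oplus C,S+T)$.
   Context: Fix a field $K$; quiver with vertex set $Q_0$, $R=K^{Q_0}$, arrow span $A$ (an $R$-bimodule, $A_{i,j}=e_iAe_j$ spanned by arrows from $j$ to $i$). $R\langle\langle A\rangle\rangle=\prod_{d\ge0}A^d$ is the complete path algebra (possibly infinite linear combinations of paths) with the $\mathfrak m$-adic topology, $\mathfrak m=\prod_{d\ge1}A^d$. A potential is a possibly infinite linear combination of cyclic paths; cyclic equivalence: difference lies in the closure of the span of $a_1\cdots a_d-a_2\cdots a_da_1$. For $\xi\in A^\star$, $\partial_\xi(a_1\cdots a_d)=\sum_k\xi(a_k)a_{k+1}\cdots a_da_1\cdots a_{k-1}$. $J(S)$ is the closure of the two-sided ideal generated by all $\partial_\xi S$; $\mathcal P(A,S)=R\langle\langle A\rangle\rangle/J(S)$. A QP $(A,S)$: no loops ($A_{i,i}=0$) and no two cyclically equivalent cyclic paths in $S$. $(A,S)\oplus(C,T)=(A\oplus C,S+T)$, with $R\langle\langle A\rangle\rangle$ and $R\langle\langle C\rangle\rangle$ embedded as closed subalgebras of $R\langle\langle A\oplus C\rangle\rangle$. A QP $(C,T)$ is trivial if $T\in C^2$ and $\{\partial_\xi T:\xi\in C^\star\}=C$. *)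

(* Defs.v *)
From HB Require Import structures.
From mathcomp Require Import all_boot all_algebra.
Set Implicit Arguments. Unset Strict Implicit. Unset Printing Implicit Defensive.
Import GRing.Theory.
Local Open Scope ring_scope.

Section CPA.
Variables (K : fieldType) (V Ar : finType) (src tgt : Ar -> V).

(* A path a_1 a_2 ... a_d (a_d traversed first, composition order):
   src a_k = tgt a_(k+1).  Encoded as (target vertex, list of arrows);
   the empty list at vertex i is the trivial path e_i. *)
Definition composable (s : seq Ar) : bool :=
  if s is a :: s' then path (fun x y => src x == tgt y) a s' else true.

Definition validp (p : V * seq Ar) : bool :=
  if p.2 is a :: _ then (tgt a == p.1) && composable p.2 else true.

Definition qpath := {p : V * seq Ar | validp p}.

Definition ptgt (p : qpath) : V := (val p).1.
Definition parrows (p : qpath) : seq Ar := (val p).2.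
Definition psrc (p : qpath) : V :=
  if parrows p is a :: s then src (last a s) else ptgt p.
Definition plen (p : qpath) : nat := size (parrows p).

(* R<<A>> = prod_d A^d : arbitrary (possibly infinite) K-combinations of paths *)
Definition cpa := qpath -> K.

(* coefficient of a raw word (0 if it is not a path) *)
Definition pv (f : cpa) (q : V * seq Ar) : K :=
  if (insub q : option qpath) is Some q' then f q' else 0.

Definition cpa_add (f g : cpa) : cpa := fun p => f p + g p.
Definition cpa_opp (f : cpa) : cpa := fun p => - f p.
Definition cpa_mul (f g : cpa) : cpa := fun p =>
  \sum_(k < (plen p).+1)
     pv f (ptgt p, take k (parrows p)) *
     pv g (if drop k (parrows p) is a :: _ then tgt a else psrc p,
           drop k (parrows p)).

Definition ideal_gen (G : cpa -> Prop) (x : cpa) : Prop :=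
  exists n (u g w : 'I_n -> cpa), (forall j, G (g j)) /\
    forall p, x p = \sum_(j < n) cpa_mul (cpa_mul (u j) (g j)) (w j) p.

(* closure in the m-adic topology (m^n = prod_(d >= n) A^d) *)
Definition mclosure (X : cpa -> Prop) (y : cpa) : Prop :=
  forall n : nat, exists x, X x /\ forall p, (plen p < n)%N -> x p = y p.

Definition cyclicp (p : qpath) : bool := (0 < plen p)%N && (psrc p == ptgt p).
Definition potential (S : cpa) : Prop := forall p, S p != 0 -> cyclicp p.
Definition no_loops : Prop := forall a, src a != tgt a.
Definition cyc_equiv_paths (p q : qpath) : Prop :=
  exists k, parrows q = rot k (parrows p).

Definition QP (S : cpa) : Prop :=
  no_loops /\ potential S /\
  forall p q, cyclicp p -> cyclicp q -> p != q -> cyc_equiv_paths p q ->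
    S p = 0 \/ S q = 0.

Definition pcyc (S : cpa) (w : seq Ar) : K :=
  if w is a :: w' then
    (if src (last a w') == tgt a then pv S (tgt a, w) else 0)
  else 0.

(* cyclic derivative d_xi, xi in A^* given by its values on the arrow basis:
   d_xi (a_1...a_d) = sum_k xi(a_k) a_(k+1)...a_d a_1...a_(k-1).
   Coefficient of p = u v (u = take j, v = drop j) comes from c = v a u. *)
Definition cder (xi : Ar -> K) (S : cpa) : cpa := fun p =>
  \sum_(j < (plen p).+1) \sum_(a : Ar)
     (if src a == ptgt p then
        xi a * pcyc S (drop j (parrows p) ++ a :: take j (parrows p))
      else 0).

Definition jac_ideal (S : cpa) : cpa -> Prop :=
  mclosure (ideal_gen (fun g => exists xi : Ar -> K, forall p, g p = cder xi S p)).

(* (C,T) trivial QP: T in C^2 and {d_xi T | xi in C^*} = C (= degree-1 part) *)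
Definition trivial_QP (T : cpa) : Prop :=
  QP T /\ (forall p, plen p != 2%N -> T p = 0) /\
  (forall f : cpa, (forall p, plen p != 1%N -> f p = 0) <->
                   exists xi : Ar -> K, forall p, f p = cder xi T p).

End CPA.

Definition sum_map (V A C : Type) (fA : A -> V) (fC : C -> V) : A + C -> V :=
  fun x => match x with inl a => fA a | inr c => fC c end.

Section Emb.
Variables (K : fieldType) (V Ar Ca : finType)
  (srcA tgtA : Ar -> V) (srcC tgtC : Ca -> V).

Let sAC := sum_map srcA srcC.
Let tAC := sum_map tgtA tgtC.

Definition getl (x : Ar + Ca) : option Ar := if x is inl a then Some a else None.
Definition getr (x : Ar + Ca) : option Ca := if x is inr c then Some c else None.

Definition embl (f : cpa K srcA tgtA) : cpa K sAC tAC := fun p =>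
  if all (fun x => getl x != None) (parrows p)
  then pv f (ptgt p, pmap getl (parrows p)) else 0.
Definition embr (f : cpa K srcC tgtC) : cpa K sAC tAC := fun p =>
  if all (fun x => getr x != None) (parrows p)
  then pv f (ptgt p, pmap getr (parrows p)) else 0.

Definition sum_pot (S : cpa K srcA tgtA) (T : cpa K srcC tgtC) : cpa K sAC tAC :=
  cpa_add (embl S) (embr T).

End Emb.

(* Main.v *)
Require Import Defs.
From mathcomp Require Import all_boot all_algebra.
From Stdlib Require Import FunctionalExtensionality ClassicalEpsilon.
Set Implicit Arguments. Unset Strict Implicit. Unset Printing Implicit Defensive.
Import GRing.Theory.
Local Open Scope ring_scope.

Section Q.
Variables (K : fieldType) (V Ar : finType) (src tgt : Ar -> V).
Local Notation cpa := (cpa K src tgt).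
Local Notation validp := (validp src tgt).
Local Notation composable := (composable src tgt).

Lemma composable_cons a t : composable (a :: t) = validp (src a, t).
Proof. by case: t => [|b t] //=; rewrite eq_sym. Qed.

Lemma validp_cons v a t : validp (v, a :: t) = (tgt a == v) && validp (src a, t).
Proof. by rewrite -composable_cons. Qed.

Lemma pv_val (f : cpa) (p : qpath src tgt) : pv f (val p) = f p.
Proof. by rewrite /pv valK. Qed.

Lemma pv_pair (f : cpa) v w (H : validp (v, w)) : pv f (v, w) = f (exist _ (v, w) H).
Proof.
rewrite /pv; case: insubP => [q Hq Eq|]; last by rewrite H.
by congr f; apply: val_inj.
Qed.

Lemma pv_invalid (f : cpa) v w : ~~ validp (v, w) -> pv f (v, w) = 0.
Proof. by move=> H; rewrite /pv; case: insubP => [q Hq _|//]; rewrite Hq in H. Qed.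

Definition wsrc (v : V) (w : seq Ar) := if w is c :: w' then src (last c w') else v.
Definition vk (v : V) (w : seq Ar) k := if drop k w is b :: _ then tgt b else wsrc v w.

Lemma vkS v a t k : vk v (a :: t) k.+1 = vk (src a) t k.
Proof. by rewrite /vk /=; case: t. Qed.

Lemma cpa_mulE (f g : cpa) v w H :
  cpa_mul f g (exist _ (v, w) H) =
  \sum_(k < (size w).+1) pv f (v, take k w) * pv g (vk v w k, drop k w).
Proof. by []. Qed.

Lemma pv_mul (f g : cpa) v w : pv (cpa_mul f g) (v, w) =
  if validp (v, w) then
  \sum_(k < (size w).+1) pv f (v, take k w) * pv g (vk v w k, drop k w) else 0.
Proof.
case: (boolP (validp (v, w))) => H; last by rewrite pv_invalid.
by rewrite (pv_pair _ H) cpa_mulE.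
Qed.

Definition mono (a : Ar) : cpa := fun p => (parrows p == [:: a])%:R.
Definition one : cpa := fun p => (parrows p == [::])%:R.

Lemma pv_mono a v w : pv (mono a) (v, w) = ((v == tgt a) && (w == [:: a]))%:R.
Proof.
case: (boolP (validp (v, w))) => H.
  rewrite (pv_pair _ H) /mono /parrows /=.
  case: eqP => [Ew|]; last by rewrite andbF.
  by move: H; rewrite Ew validp_cons => /andP[/eqP -> _]; rewrite eqxx.
rewrite pv_invalid //; case: eqP => // Ev; case: eqP => // Ew.
by move: H; rewrite Ev Ew validp_cons eqxx.
Qed.

Lemma pv_one v w : pv one (v, w) = (w == [::])%:R.
Proof.
case: (boolP (validp (v, w))) => H; first by rewrite (pv_pair _ H).
by rewrite pv_invalid //; case: w H.
Qed.

Lemma mul_monoE a (f : cpa) p : cpa_mul (mono a) f p =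
  if parrows p is a' :: t then (a' == a)%:R * pv f (src a', t) else 0.
Proof.
case: p => [[v w] H]; rewrite cpa_mulE /parrows /=.
case: w H => [|a' t] H.
  by rewrite big_ord_recl big_ord0 pv_mono /= andbF mul0r addr0.
rewrite big_ord_recl pv_mono /= andbF mul0r add0r.
rewrite big_ord_recl big1 ?addr0; last first.
  move=> i _; rewrite pv_mono /=.
  case: t H i => [|b t] H i; first by case: i.
  by rewrite /= !eqseq_cons andbF /= andbF mul0r.
rewrite pv_mono /= addn0 take0 drop0 eqseq_cons andbT.
case: (a' =P a) => [Ea|]; last by rewrite andbF !mul0r.
subst a'; move: H; rewrite validp_cons eq_sym => /andP[-> H] /=.
congr (_ * pv f (_, _)).
rewrite /vk /=; case: t H => [|b t] //= /andP[/eqP -> _] //.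
Qed.

Lemma pv_mul_mono a (f : cpa) v w : pv (cpa_mul (mono a) f) (v, w) =
  if w is a' :: t then ((v == tgt a') && (a' == a))%:R * pv f (src a', t) else 0.
Proof.
case: (boolP (validp (v, w))) => H.
  rewrite (pv_pair _ H) mul_monoE /parrows /=.
  by case: w H => [|a' t] // H; move: H; rewrite validp_cons eq_sym => /andP[-> _].
rewrite pv_invalid //; case: w H => [|a' t] // H.
case: eqP => [Ev|]; last by rewrite mul0r.
rewrite pv_invalid ?mulr0 //.
by move: H; rewrite validp_cons Ev eqxx.
Qed.

Lemma one_mulE (f : cpa) p : cpa_mul one f p = f p.
Proof.
case: p => [[v w] H]; rewrite cpa_mulE.
rewrite big_ord_recl big1 ?addr0; last first.
  move=> i _; rewrite pv_one.
  by case: w H i => [|b t] H i; [case: i|rewrite /= mul0r].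
rewrite pv_one take0 eqxx mul1r drop0.
have Hv : validp (vk v w 0, w).
  rewrite /vk drop0; case: w H => [|b t] // /andP[_ Hc].
  by rewrite validp_cons eqxx -composable_cons.
rewrite (pv_pair _ Hv); congr f; apply: val_inj => /=.
by rewrite /vk drop0 /=; case: w H Hv => [|b t] // /andP[/eqP -> _].
Qed.

Lemma mono_assoc a (f h : cpa) p :
  cpa_mul (mono a) (cpa_mul f h) p = cpa_mul (cpa_mul (mono a) f) h p.
Proof.
rewrite mul_monoE; case: p => [[v w] H]; rewrite cpa_mulE /parrows /=.
case: w H => [|a' t] H.
  by rewrite big_ord_recl big_ord0 pv_mul_mono mul0r addr0.
rewrite big_ord_recl pv_mul_mono mul0r add0r.
move: H; rewrite validp_cons => /andP[/eqP Ev H].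
rewrite pv_mul H big_distrr; apply: eq_bigr => i _ /=.
rewrite pv_mul_mono -Ev eqxx /= vkS.
by rewrite mulrA.
Qed.

Lemma pv_sum (x : cpa) n (F : 'I_n -> cpa) :
  (forall p, x p = \sum_(j < n) F j p) ->
  forall w, pv x w = \sum_(j < n) pv (F j) w.
Proof.
move=> Hx w; rewrite /pv; case: insub => [p|]; first by rewrite Hx.
by rewrite big1.
Qed.

Lemma mul_mono_sum a (x : cpa) n (F : 'I_n -> cpa) :
  (forall p, x p = \sum_(j < n) F j p) ->
  forall p, cpa_mul (mono a) x p = \sum_(j < n) cpa_mul (mono a) (F j) p.
Proof.
move=> Hx p; rewrite mul_monoE.
under eq_bigr do rewrite mul_monoE.
case: (parrows p) => [|a' t]; first by rewrite big1.
by rewrite (pv_sum Hx) big_distrr.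
Qed.

Section Ideal.
Variable G : cpa -> Prop.

Lemma I_ext (f g : cpa) : ideal_gen G f -> (forall p, f p = g p) -> ideal_gen G g.
Proof.
move=> [n [u [h [w [Hg Hf]]]]] E; exists n, u, h, w; split => // p.
by rewrite -E.
Qed.

Lemma I_zero : ideal_gen G (fun _ => 0).
Proof.
exists 0%N, (fun _ => one), (fun _ => one), (fun _ => one); split; first by case.
by move=> p; rewrite big_ord0.
Qed.

Lemma I_gen (u g w : cpa) : G g -> ideal_gen G (cpa_mul (cpa_mul u g) w).
Proof.
move=> Hg; exists 1%N, (fun _ => u), (fun _ => g), (fun _ => w); split => //.
by move=> p; rewrite big_ord1.
Qed.

Lemma I_add (f g : cpa) : ideal_gen G f -> ideal_gen G g -> ideal_gen G (cpa_add f g).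
Proof.
move=> [n1 [u1 [g1 [w1 [Hg1 Hf1]]]]] [n2 [u2 [g2 [w2 [Hg2 Hf2]]]]].
pose sel (T : Type) (a : 'I_n1 -> T) (b : 'I_n2 -> T) (j : 'I_(n1 + n2)) :=
  match split j with inl j1 => a j1 | inr j2 => b j2 end.
exists (n1 + n2)%N, (sel _ u1 u2), (sel _ g1 g2), (sel _ w1 w2); split.
  by move=> j; rewrite /sel; case: split.
move=> p; rewrite /cpa_add Hf1 Hf2 big_split_ord /sel.
congr (_ + _); apply: eq_bigr => j _.
  by have := unsplitK (inl j : 'I_n1 + 'I_n2) => /= ->.
by have := unsplitK (inr j : 'I_n1 + 'I_n2) => /= ->.
Qed.

Lemma I_sum (T : Type) (r : seq T) (F : T -> cpa) :
  (forall i, ideal_gen G (F i)) -> ideal_gen G (fun p => \sum_(i <- r) F i p).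
Proof.
move=> HF; elim: r => [|i r IH].
  by apply: I_ext I_zero _ => p; rewrite big_nil.
apply: I_ext (I_add (HF i) IH) _ => p.
by rewrite big_cons.
Qed.

Lemma I_mono a (x : cpa) : ideal_gen G x -> ideal_gen G (cpa_mul (mono a) x).
Proof.
move=> [n [u [g [w [Hg Hx]]]]].
exists n, (fun j => cpa_mul (mono a) (u j)), g, w; split => //.
move=> p; rewrite (mul_mono_sum a Hx); apply: eq_bigr => j _.
rewrite mono_assoc; congr (cpa_mul _ _ p).
by apply: functional_extensionality => q; rewrite mono_assoc.
Qed.

End Ideal.
End Q.

Section Ind.
Variables (K : fieldType) (V Y : finType) (src tgt : Y -> V).
Local Notation cpa := (cpa K src tgt).
Local Notation mono := (@mono K _ _ src tgt).
Local Notation one := (@one K _ _ src tgt).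
Variable G : cpa -> Prop.
Variable bad : pred Y.
Hypothesis HG : forall y, bad y -> G (mono y).

Lemma approx n (z : cpa) : (forall p, ~~ has bad (parrows p) -> z p = 0) ->
  exists x, ideal_gen G x /\ forall p, (plen p < n)%N -> x p = z p.
Proof.
elim: n z => [|n IH] z Hz.
  by exists (fun _ => 0); split; [exact: I_zero|].
pose zy y : cpa := fun q => pv z (tgt y, y :: parrows q).
have Hc : forall y, exists x : cpa, (~~ bad y -> ideal_gen G x) /\
    forall p, (plen p < n)%N -> x p = zy y p.
  move=> y; case: (boolP (bad y)) => Hy; first by exists (zy y).
  have [x [Ix Ax]] : exists x, ideal_gen G x /\ forall p, (plen p < n)%N -> x p = zy y p.
    apply: IH => q Hq; rewrite /zy.
    case: (boolP (validp src tgt (tgt y, y :: parrows q))) => H; last by rewrite pv_invalid.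
    by rewrite (pv_pair _ H) Hz //= negb_or Hy.
  by exists x.
pose xs y := proj1_sig (constructive_indefinite_description _ (Hc y)).
have xsP y : _ := proj2_sig (constructive_indefinite_description _ (Hc y)).
pose W y := if bad y then zy y else xs y.
have TE : forall y p, (if bad y then cpa_mul (cpa_mul (one) (mono y)) (zy y)
                       else cpa_mul (mono y) (xs y)) p = cpa_mul (mono y) (W y) p.
  move=> y p; rewrite /W; case: (bad y) => //.
  congr (cpa_mul _ _ p); apply: functional_extensionality => q.
  by rewrite one_mulE.
exists (fun p => \sum_(y <- index_enum Y)
   (if bad y then cpa_mul (cpa_mul (one) (mono y)) (zy y)
    else cpa_mul (mono y) (xs y)) p); split.
  apply: I_sum => y; case: (boolP (bad y)) => Hy; first by apply: I_gen; apply: HG.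
  by apply: I_mono; apply: (proj1 (xsP y)).
move=> p Hp; under eq_bigr do rewrite TE.
move: Hp; case: p => [[v w] H] Hp.
under eq_bigr do rewrite mul_monoE.
case: w H Hp => [|a t] H Hp /=.
  by rewrite big1 // Hz.
rewrite (bigD1 a) //= eqxx mul1r big1 ?addr0; last first.
  by move=> y /negbTE; rewrite eq_sym => ->; rewrite mul0r.
have /andP[/eqP Ev Ht] : (tgt a == v) && validp src tgt (src a, t) by rewrite -validp_cons.
subst v; rewrite (pv_pair _ Ht) /W; case: (boolP (bad a)) => Ha.
  by rewrite /zy /= (pv_pair _ H).
rewrite /xs (proj2 (xsP a)) //.
by rewrite /zy /= (pv_pair _ H).
Qed.

End Ind.

Section Emb2.
Variables (K : fieldType) (V X Y : finType) (sX tX : X -> V) (sY tY : Y -> V).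
Variables (phi : X -> Y) (psi : Y -> option X).
Hypotheses (hs : forall x, sY (phi x) = sX x) (ht : forall x, tY (phi x) = tX x).
Hypotheses (hK : pcancel phi psi) (hK2 : forall y x, psi y = Some x -> phi x = y).
Local Notation cX := (cpa K sX tX).
Local Notation cY := (cpa K sY tY).
Local Notation inim := (fun y => psi y != None).

Definition ee (f : cX) : cY := fun p =>
  if all inim (parrows p) then pv f (ptgt p, pmap psi (parrows p)) else 0.

Lemma validp_map v t : validp sY tY (v, map phi t) = validp sX tX (v, t).
Proof.
case: t => [|a t] //; rewrite !validp_cons ht.
congr (_ && _).
elim: t a => [|b t IH] a //.
rewrite /= in IH *; rewrite !validp_cons ht hs.
by congr (_ && _); apply: IH.
Qed.

Lemma iota_proof (q : qpath sX tX) : validp sY tY ((val q).1, map phi (val q).2).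
Proof. by rewrite validp_map; case: q => [[v w] H]. Qed.

Definition iota (q : qpath sX tX) : qpath sY tY :=
  exist (fun p => validp sY tY p) _ (iota_proof q).
Definition pull (f : cY) : cX := fun q => f (iota q).

Lemma pv_map (f : cY) v t : pv f (v, map phi t) = pv (pull f) (v, t).
Proof.
case: (boolP (validp sX tX (v, t))) => H.
  have H' : validp sY tY (v, map phi t) by rewrite validp_map.
  rewrite (pv_pair _ H') (pv_pair _ H) /pull; congr f; exact: val_inj.
by rewrite !pv_invalid // validp_map.
Qed.

Lemma pmap_map_id t : pmap psi (map phi t) = t.
Proof. by elim: t => //= a t ->; rewrite hK. Qed.

Lemma all_map_in t : all inim (map phi t).
Proof. by elim: t => //= a t ->; rewrite hK. Qed.

Lemma map_pmap w : all inim w -> map phi (pmap psi w) = w.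
Proof.
elim: w => //= y w IH /andP[Hy Hw].
case E: (psi y) Hy => [x|] // _.
by rewrite /= (hK2 E) IH.
Qed.

Lemma ee_iota (f : cX) q : ee f (iota q) = f q.
Proof.
rewrite /ee /= all_map_in pmap_map_id.
case: q => [[v w] H] /=; rewrite (pv_pair _ H); congr f; exact: val_inj.
Qed.

Lemma pull_ee (f : cX) : pull (ee f) = f.
Proof. by apply: functional_extensionality => q; rewrite /pull ee_iota. Qed.

Lemma ee_val_iota (p : qpath sY tY) : all inim (parrows p) ->
  exists q, p = iota q.
Proof.
move=> Ha.
have Hq : validp sX tX (ptgt p, pmap psi (parrows p)).
  by rewrite -validp_map map_pmap //; case: p Ha => [[v w] H].
exists (exist (fun p => validp sX tX p) _ Hq); apply: val_inj => /=.
by rewrite map_pmap //; case: p Ha {Hq} => [[v w] H].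
Qed.

Lemma pv_ee (f : cX) v w : pv (ee f) (v, w) = if all inim w then pv f (v, pmap psi w) else 0.
Proof.
case: (boolP (validp sY tY (v, w))) => H; first by rewrite (pv_pair _ H).
rewrite pv_invalid //; case: ifP => // Ha.
by rewrite pv_invalid // -validp_map map_pmap.
Qed.

Lemma vk_map v w k : vk sY tY v (map phi w) k = vk sX tX v w k.
Proof.
rewrite /vk -map_drop; case: (drop k w) => [|b s] /=; last by rewrite ht.
by case: w => [|a w] //=; rewrite last_map hs.
Qed.

Lemma pull_mul (f g : cY) : pull (cpa_mul f g) = cpa_mul (pull f) (pull g).
Proof.
apply: functional_extensionality => q; case: q => [[v w] H].
rewrite /pull /iota /= !cpa_mulE /= size_map; apply: eq_bigr => k _.
by rewrite -map_take -map_drop !pv_map vk_map.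
Qed.

Lemma ee_mul (f g : cX) : ee (cpa_mul f g) = cpa_mul (ee f) (ee g).
Proof.
apply: functional_extensionality => p.
case: (boolP (all inim (parrows p))) => Ha.
  have [q ->] := ee_val_iota Ha.
  rewrite ee_iota.
  change (cpa_mul (ee f) (ee g) (iota q)) with (pull (cpa_mul (ee f) (ee g)) q).
  by rewrite pull_mul !pull_ee.
rewrite /ee (negbTE Ha).
case: p Ha => [[v w] H] Ha; rewrite cpa_mulE big1 // => k _.
rewrite !pv_ee.
move: Ha; rewrite /parrows /= -{1}(cat_take_drop k w) all_cat.
by case: (all _ (take k w)); case: (all _ (drop k w)) => //= _; rewrite ?mul0r ?mulr0.
Qed.

Lemma pcyc_map (f : cY) w : pcyc f (map phi w) = pcyc (pull f) w.
Proof.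
case: w => [|a w] //.
rewrite /pcyc /= last_map hs ht.
case: ifP => // _.
by rewrite -pv_map.
Qed.

Lemma pcyc_ee (f : cX) w : pcyc (ee f) w = if all inim w then pcyc f (pmap psi w) else 0.
Proof.
case: ifP => Ha; first by rewrite -{1}(map_pmap Ha) pcyc_map pull_ee.
case: w Ha => [|a w] // Ha; rewrite /pcyc; case: ifP => // _.
by rewrite pv_ee Ha.
Qed.

Lemma ee_sum (x : cX) n (F : 'I_n -> cX) :
  (forall p, x p = \sum_(j < n) F j p) ->
  forall p, ee x p = \sum_(j < n) ee (F j) p.
Proof.
move=> Hx p; rewrite /ee; case: ifP => _; first exact: pv_sum.
by rewrite big1.
Qed.

End Emb2.

Lemma pv_add (K : fieldType) (V Y : finType) (s t : Y -> V) (f g : cpa K s t) w :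
  pv (cpa_add f g) w = pv f w + pv g w.
Proof. by rewrite /pv; case: insub => [p|] //; rewrite addr0. Qed.

Lemma pcyc_add (K : fieldType) (V Y : finType) (s t : Y -> V) (f g : cpa K s t) w :
  pcyc (cpa_add f g) w = pcyc f w + pcyc g w.
Proof. by case: w => [|a w] /=; [rewrite addr0|case: ifP; rewrite ?pv_add ?addr0]. Qed.

Section Sum.
Variables (K : fieldType) (V Ar Ca : finType) (srcA tgtA : Ar -> V) (srcC tgtC : Ca -> V).
Local Notation sY := (sum_map srcA srcC).
Local Notation tY := (sum_map tgtA tgtC).
Variables (S : cpa K srcA tgtA) (T : cpa K srcC tgtC).
Hypotheses (nlA : no_loops srcA tgtA) (nlC : no_loops srcC tgtC).

Lemma hsl (a : Ar) : sY (inl a) = srcA a. Proof. by []. Qed.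
Lemma htl (a : Ar) : tY (inl a) = tgtA a. Proof. by []. Qed.
Lemma hsr (c : Ca) : sY (inr c) = srcC c. Proof. by []. Qed.
Lemma htr (c : Ca) : tY (inr c) = tgtC c. Proof. by []. Qed.
Lemma hKl : pcancel (@inl Ar Ca) (@getl Ar Ca). Proof. by []. Qed.
Lemma hKr : pcancel (@inr Ar Ca) (@getr Ar Ca). Proof. by []. Qed.
Lemma hK2l y x : (@getl Ar Ca) y = Some x -> @inl Ar Ca x = y. Proof. by case: y => //= a [->]. Qed.
Lemma hK2r y x : (@getr Ar Ca) y = Some x -> @inr Ar Ca x = y. Proof. by case: y => //= a [->]. Qed.

Local Notation ST := (sum_pot S T).
Local Notation isl := (fun y : Ar + Ca => (@getl Ar Ca) y != None).
Local Notation isr := (fun y : Ar + Ca => (@getr Ar Ca) y != None).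

Lemma embl_ee (f : cpa K srcA tgtA) :
  @embl K V Ar Ca srcA tgtA srcC tgtC f = ee (sY:=sY) (tY:=tY) (@getl Ar Ca) f.
Proof. by []. Qed.
Lemma embr_ee (f : cpa K srcC tgtC) :
  @embr K V Ar Ca srcA tgtA srcC tgtC f = ee (sY:=sY) (tY:=tY) (@getr Ar Ca) f.
Proof. by []. Qed.

Lemma pcyc_ST_l w : pcyc ST (map inl w) = pcyc S w.
Proof.
case: w => [|a w] //.
rewrite /sum_pot pcyc_add embl_ee embr_ee (pcyc_ee hsl htl hKl hK2l)
  (pcyc_ee hsr htr hKr hK2r) (all_map_in hKl) (pmap_map_id hKl) /=.
by rewrite addr0.
Qed.

Lemma pcyc_ST_r w : pcyc ST (map inr w) = pcyc T w.
Proof.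
case: w => [|a w] //.
rewrite /sum_pot pcyc_add embl_ee embr_ee (pcyc_ee hsl htl hKl hK2l)
  (pcyc_ee hsr htr hKr hK2r) (all_map_in hKr) (pmap_map_id hKr) /=.
by rewrite add0r.
Qed.

Lemma all_isr_mapl l : all isr (map inl l) = (l == [::]).
Proof. by case: l. Qed.
Lemma all_isl_mapr l : all isl (map inr l) = (l == [::]).
Proof. by case: l. Qed.

Lemma cderL xi q : cder xi ST (iota hsl htl q) = cder (fun a => xi (inl a)) S q.
Proof.
case: q => [[v w] H]; rewrite /cder /plen /parrows /ptgt /= size_map.
apply: eq_bigr => j _; rewrite big_sumType /=.
rewrite [X in _ + X]big1 ?addr0.
  apply: eq_bigr => a _; case: ifP => // _.
  by rewrite -map_take -map_drop -map_cons -map_cat pcyc_ST_l.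
move=> c _; case: ifP => // _.
rewrite /sum_pot pcyc_add embl_ee embr_ee (pcyc_ee hsl htl hKl hK2l)
  (pcyc_ee hsr htr hKr hK2r) -map_take -map_drop.
rewrite all_cat /= andbF add0r all_cat /= !all_isr_mapl.
case: (drop j w) => [|? ?] //=; last by rewrite mulr0.
case: (take j w) => [|? ?] //=; last by rewrite mulr0.
by rewrite /pcyc /= (negbTE (nlC c)) mulr0.
Qed.

Lemma cderR xi q : cder xi ST (iota hsr htr q) = cder (fun c => xi (inr c)) T q.
Proof.
case: q => [[v w] H]; rewrite /cder /plen /parrows /ptgt /= size_map.
apply: eq_bigr => j _; rewrite big_sumType /=.
rewrite [X in X + _]big1 ?add0r.
  apply: eq_bigr => a _; case: ifP => // _.
  by rewrite -map_take -map_drop -map_cons -map_cat pcyc_ST_r.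
move=> c _; case: ifP => // _.
rewrite /sum_pot pcyc_add embl_ee embr_ee (pcyc_ee hsl htl hKl hK2l)
  (pcyc_ee hsr htr hKr hK2r) -map_take -map_drop.
have -> : all isr (map inr (drop j w) ++ inl c :: map inr (take j w)) = false.
  by rewrite all_cat /= andbF.
rewrite addr0 all_cat /= !all_isl_mapr.
case: (drop j w) => [|? ?] //=; last by rewrite mulr0.
case: (take j w) => [|? ?] //=; last by rewrite mulr0.
by rewrite /pcyc /= (negbTE (nlA c)) mulr0.
Qed.

Lemma cder_offL xi p : (forall c, xi (inr c) = 0) -> ~~ all isl (parrows p) ->
  cder xi ST p = 0.
Proof.
move=> Hxi Ha; rewrite /cder big1 // => j _.
rewrite big_sumType /= [X in _ + X]big1 ?addr0; last first.
  by move=> c _; case: ifP => // _; rewrite Hxi mul0r.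
apply: big1 => a _; case: ifP => // _.
rewrite /sum_pot pcyc_add embl_ee embr_ee (pcyc_ee hsl htl hKl hK2l)
  (pcyc_ee hsr htr hKr hK2r).
have -> : all isl (drop j (parrows p) ++ inl a :: take j (parrows p)) = false.
  apply/negbTE; apply: contra Ha; rewrite all_cat /= => /andP[H1 H2].
  by rewrite -(cat_take_drop j (parrows p)) all_cat H1 H2.
by rewrite all_cat /= andbF addr0 mulr0.
Qed.

Lemma cder_offR xi p : (forall a, xi (inl a) = 0) -> ~~ all isr (parrows p) ->
  cder xi ST p = 0.
Proof.
move=> Hxi Ha; rewrite /cder big1 // => j _.
rewrite big_sumType /= [X in X + _]big1 ?add0r; last first.
  by move=> c _; case: ifP => // _; rewrite Hxi mul0r.
apply: big1 => a _; case: ifP => // _.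
rewrite /sum_pot pcyc_add embl_ee embr_ee (pcyc_ee hsl htl hKl hK2l)
  (pcyc_ee hsr htr hKr hK2r).
have -> : all isr (drop j (parrows p) ++ inr a :: take j (parrows p)) = false.
  apply/negbTE; apply: contra Ha; rewrite all_cat /= => /andP[H1 H2].
  by rewrite -(cat_take_drop j (parrows p)) all_cat H1 H2.
by rewrite all_cat /= andbF add0r mulr0.
Qed.

End Sum.

Theorem proposition4p5 (K : fieldType) (V Ar Ca : finType)
  (srcA tgtA : Ar -> V) (srcC tgtC : Ca -> V)
  (S : cpa K srcA tgtA) (T : cpa K srcC tgtC) :
  QP S -> trivial_QP T ->
  (* the embedding maps J(S) into J(S+T) (well-defined) and is injective mod J *)
  (forall x : cpa K srcA tgtA,
      jac_ideal S x <-> jac_ideal (sum_pot S T) (@embl K V Ar Ca srcA tgtA srcC tgtC x)) /\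
  (* the induced map P(A,S) -> P(A+C,S+T) is surjective *)
  (forall y : cpa K (sum_map srcA srcC) (sum_map tgtA tgtC),
      exists x : cpa K srcA tgtA,
        jac_ideal (sum_pot S T) (cpa_add y (cpa_opp (@embl K V Ar Ca srcA tgtA srcC tgtC x)))).
Proof.
move=> HS HT.
have nlA := HS.1. have nlC := HT.1.1.
set ST := sum_pot S T.
pose GS := fun g : cpa K srcA tgtA => exists xi, forall p, g p = cder xi S p.
pose GST := fun g : cpa K (sum_map srcA srcC) (sum_map tgtA tgtC) =>
  exists xi, forall p, g p = cder xi ST p.
have hKl' := @hKl Ar Ca. have hK2l' := @hK2l Ar Ca.
have hKr' := @hKr Ar Ca. have hK2r' := @hK2r Ar Ca.
have IA : forall x, ideal_gen GS x -> ideal_gen GST (@embl K V Ar Ca srcA tgtA srcC tgtC x).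
  move=> x [n [u [g [w [Hg Hx]]]]].
  exists n, (fun j => @embl K V Ar Ca srcA tgtA srcC tgtC (u j)), (fun j => @embl K V Ar Ca srcA tgtA srcC tgtC (g j)),
    (fun j => @embl K V Ar Ca srcA tgtA srcC tgtC (w j)); split.
    move=> j; have [xi Hxi] := Hg j.
    have -> : g j = cder xi S by apply: functional_extensionality.
    exists (sum_map xi (fun _ => 0)) => p.
    case: (boolP (all (fun y => @getl Ar Ca y != None) (parrows p))) => Ha.
      have [q ->] := ee_val_iota (hsl srcA srcC) (htl tgtA tgtC) hK2l' Ha.
      by rewrite embl_ee (ee_iota _ _ hKl') cderL.
    by rewrite cder_offL // embl_ee /ee (negbTE Ha).
  move=> p; rewrite !embl_ee (ee_sum _ Hx); apply: eq_bigr => j _.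
  by rewrite !(ee_mul (hsl srcA srcC) (htl tgtA tgtC) hKl' hK2l').
have IB : forall y, ideal_gen GST y -> ideal_gen GS (pull (hsl srcA srcC) (htl tgtA tgtC) y).
  move=> y [n [u [g [w [Hg Hy]]]]].
  exists n, (fun j => pull (hsl srcA srcC) (htl tgtA tgtC) (u j)),
    (fun j => pull (hsl srcA srcC) (htl tgtA tgtC) (g j)),
    (fun j => pull (hsl srcA srcC) (htl tgtA tgtC) (w j)); split.
    move=> j; have [xi Hxi] := Hg j.
    exists (fun a => xi (inl a)) => q.
    by rewrite /pull Hxi cderL.
  move=> q; rewrite /pull Hy; apply: eq_bigr => j _.
  by rewrite -!pull_mul.
split.
  move=> x; split.
    move=> Hj n; have [x' [Ix Ax]] := Hj n.
    exists (@embl K V Ar Ca srcA tgtA srcC tgtC x'); split; first exact: IA.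
    move=> p Hp; rewrite !embl_ee /ee; case: ifP => // Ha.
    rewrite /pv; case: insubP => [q Hq Eq|] //; apply: Ax.
    rewrite /plen /parrows Eq /=.
    by rewrite -(size_map (@inl Ar Ca)) (map_pmap hK2l').
  move=> Hj n; have [y' [Iy Ay]] := Hj n.
  exists (pull (hsl srcA srcC) (htl tgtA tgtC) y'); split; first exact: IB.
  move=> q Hq; rewrite /pull Ay; first by rewrite embl_ee (ee_iota _ _ hKl').
  by rewrite /plen /= size_map.
move=> y; exists (pull (hsl srcA srcC) (htl tgtA tgtC) y).
move=> n; apply: (approx (bad := fun y => @getl Ar Ca y == None)).
  case=> [a|c] //= _.
  pose f := fun q : qpath srcC tgtC => ((parrows q == [:: c])%:R : K).
  have [xi Hxi] : exists xi, forall p, f p = cder xi T p.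
    apply: (HT.2.2 f).1 => q Hq; rewrite /f; case: eqP => // E.
    by rewrite /plen E in Hq.
  exists (sum_map (fun _ => 0) xi) => p.
  case: (boolP (all (fun y => @getr Ar Ca y != None) (parrows p))) => Ha.
    have [q ->] := ee_val_iota (hsr srcA srcC) (htr tgtA tgtC) hK2r' Ha.
    rewrite cderR; try exact: nlA.
    transitivity (f q); last exact: Hxi.
    rewrite /f /mono /=.
    by case: q => [[v [|a [|b s]]] H] //=.
  rewrite cder_offR // /mono; case: eqP => // E.
  by rewrite E in Ha.
move=> p Hp.
have Ha : all (fun y => @getl Ar Ca y != None) (parrows p).
  by move: Hp; elim: (parrows p) => //= b s IH; rewrite negb_or => /andP[-> /IH].
have [q ->] := ee_val_iota (hsl srcA srcC) (htl tgtA tgtC) hK2l' Ha.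
rewrite /cpa_add /cpa_opp embl_ee (ee_iota _ _ hKl').
by rewrite /pull subrr.
Qed.
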